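(* In the Setting below, let $V_{2i}$ and $V_{2j}$ be two (possibly equal) of the $2$-dimensional summands of $J_{\mathcal M}$, with bases $\{u_i,v_i\}$ and $\{u_j,v_j\}$ satisfying $uH=u$, $vH=-v$, $uE=v$, $uF=0$, $vE=0$, $vF=-u$. Then $(u_iu_j)E=-u_iv_j$, $(u_iv_j)E=-\tfrac12 v_iv_j$, $(v_iv_j)E=0$, $(u_iu_j)F=0$, $(u_iv_j)F=\tfrac12 u_iu_j$, $(v_iv_j)F=u_iv_j$, $(u_iu_j)H=-u_iu_j$, $(u_iv_j)H=0$, $(v_iv_j)H=v_iv_j$, and $u_iv_j=v_iu_j$. Moreover $J(xy,a,b)=0$ for all $x,y\in J_{\mathcal M}$ and $a,b\in L$ (so $J_{\mathcal M}^2$ is a Lie $L$-module), and if $i=j$ then $V_{2i}V_{2i}=0$.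
   Context: Setting. Let $\mathbb F$ be a field of characteristic different from $2$ and $3$. A Malcev algebra is an anticommutative algebra $\mathcal M$ over $\mathbb F$ satisfying $(xz)(yt)=((xy)z)t+((yz)t)x+((zt)x)y+((tx)y)z$. Products are left-normed: $xyz=(xy)z$, $xyzt=((xy)z)t$. Put $J(x,y,z)=xyz+yzx+zxy$ (the Jacobian), $\{x,y,z\}=xyz-xzy+2x(yz)$, and $h(y,z,t,x,u)=\{yz,t,u\}x+\{yz,t,x\}u+\{yx,z,u\}t+\{yu,z,x\}t$. The variety $\mathcal H$ consists of the Malcev algebras satisfying $h(y,z,t,x,u)=0$ identically. Let $L=\mathfrak{sl}_2(\mathbb F)$ with basis $E,H,F$ and products $EH=E$, $FH=-F$, $EF=\tfrac12 H$. Standing assumption: $\mathcal M\in\mathcal H$ contains $L$ as a subalgebra and $mL\neq 0$ for every $0\neq m\in\mathcal M$. Define $N_{\mathcal M}=\{m\in\mathcal M: J(m,a,b)=0\ \forall a,b\in L\}$ and $J_{\mathcal M}=\{m\in\mathcal M:\{m,a,b\}=0\ \forall a,b\in L\}$. Known facts (from prior work): $\mathcal M=N_{\mathcal M}\oplus J_{\mathcal M}$; $J_{\mathcal M}$ is a direct sum of $L$-submodules $V_{2i}$, each with a basis $\{u_i,v_i\}$ satisfying $u_iH=u_i$, $v_iH=-v_i$, $u_iE=v_i$, $u_iF=0$, $v_iE=0$, $v_iF=-u_i$. *)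

(* Defs.v *)
From mathcomp Require Import all_boot all_order all_algebra.
Set Implicit Arguments. Unset Strict Implicit. Unset Printing Implicit Defensive.
Import GRing.Theory.
Local Open Scope ring_scope.

Section Defs.
Variables (F : fieldType) (M : lmodType F) (mul : M -> M -> M).
Local Notation "x ** y" := (mul x y) (at level 40, left associativity).

Definition bilinear_prod : Prop :=
  (forall (a : F) x y z, (a *: x + y) ** z = a *: (x ** z) + y ** z) /\
  (forall (a : F) x y z, z ** (a *: x + y) = a *: (z ** x) + z ** y).

Definition anticomm : Prop := forall x, x ** x = 0.

Definition malcev_identity : Prop :=
  forall x y z t,
    (x ** z) ** (y ** t) =
    x ** y ** z ** t + y ** z ** t ** x + z ** t ** x ** y + t ** x ** y ** z.

Definition malcev : Prop := bilinear_prod /\ anticomm /\ malcev_identity.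

Definition jacobian (x y z : M) : M := x ** y ** z + y ** z ** x + z ** x ** y.

Definition trip (x y z : M) : M := x ** y ** z - x ** z ** y + (x ** (y ** z)) *+ 2.

Definition hpoly (y z t x u : M) : M :=
  trip (y ** z) t u ** x + trip (y ** z) t x ** u
  + trip (y ** x) z u ** t + trip (y ** u) z x ** t.

Definition in_variety_H : Prop :=
  malcev /\ forall y z t x u, hpoly y z t x u = 0.

Definition is_sl2 (e h f : M) : Prop :=
  (forall a b c : F, a *: e + b *: h + c *: f = 0 -> [/\ a = 0, b = 0 & c = 0]) /\
  [/\ e ** h = e, f ** h = - f & e ** f = (2%:R : F)^-1 *: h].

Definition in_span3 (e h f a : M) : Prop :=
  exists al be ga : F, a = al *: e + be *: h + ga *: f.

Definition in_N (e h f m : M) : Prop :=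
  forall a b, in_span3 e h f a -> in_span3 e h f b -> jacobian m a b = 0.

Definition in_J (e h f m : M) : Prop :=
  forall a b, in_span3 e h f a -> in_span3 e h f b -> trip m a b = 0.

Definition std_pair (e h f u v : M) : Prop :=
  [/\ u ** h = u, v ** h = - v & u ** e = v] /\ [/\ u ** f = 0, v ** e = 0 & v ** f = - u].

Definition in_span2 (u v x : M) : Prop := exists a b : F, x = a *: u + b *: v.

End Defs.

(* Main.v *)
From mathcomp Require Import all_boot all_order all_algebra.
From mathcomp Require Import ring.
Require Import Defs.
Set Implicit Arguments. Unset Strict Implicit. Unset Printing Implicit Defensive.
Import GRing.Theory.
Local Open Scope ring_scope.

Section Refl.
Variables (F : fieldType) (M : lmodType F) (mul : M -> M -> M).
Hypothesis bil : bilinear_prod mul.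
Hypothesis ac : anticomm mul.

Lemma mul0l z : mul 0 z = 0.
Proof.
have := bil.1 1 0 0 z; rewrite !scale1r addr0 => h.
by apply: (addrI (mul 0 z)); rewrite addr0 -h.
Qed.
Lemma mul0r z : mul z 0 = 0.
Proof.
have := bil.2 1 0 0 z; rewrite !scale1r addr0 => h.
by apply: (addrI (mul z 0)); rewrite addr0 -h.
Qed.
Lemma mulDl x y z : mul (x + y) z = mul x z + mul y z.
Proof. by have := bil.1 1 x y z; rewrite !scale1r. Qed.
Lemma mulDr x y z : mul z (x + y) = mul z x + mul z y.
Proof. by have := bil.2 1 x y z; rewrite !scale1r. Qed.
Lemma mulZl a x z : mul (a *: x) z = a *: mul x z.
Proof. by have := bil.1 a x 0 z; rewrite !addr0 mul0l addr0. Qed.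
Lemma mulZr a x z : mul z (a *: x) = a *: mul z x.
Proof. by have := bil.2 a x 0 z; rewrite !addr0 mul0r addr0. Qed.
Lemma mulNl x z : mul (- x) z = - mul x z.
Proof. by rewrite -scaleN1r mulZl scaleN1r. Qed.
Lemma mulNr x z : mul z (- x) = - mul z x.
Proof. by rewrite -scaleN1r mulZr scaleN1r. Qed.
Lemma mulBl x y z : mul (x - y) z = mul x z - mul y z.
Proof. by rewrite mulDl mulNl. Qed.
Lemma mulBr x y z : mul z (x - y) = mul z x - mul z y.
Proof. by rewrite mulDr mulNr. Qed.
Lemma mulC x y : mul x y = - mul y x.
Proof.
have := ac (x + y); rewrite mulDl !mulDr !ac add0r addr0 => /eqP.
by rewrite addr_eq0 => /eqP.
Qed.
Lemma mulnl x z k : mul (x *+ k) z = mul x z *+ k.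
Proof. by rewrite -!scaler_nat mulZl. Qed.

Inductive tm := TV of nat | T0 | TA of tm & tm | TN of tm | TS of F & tm
  | TM of tm & tm | TK of tm & nat.
Fixpoint ev (env : seq M) t : M :=
  match t with TV n => nth 0 env n | T0 => 0 | TA a b => ev env a + ev env b
  | TN a => - ev env a | TS c a => c *: ev env a | TM a b => mul (ev env a) (ev env b)
  | TK a k => ev env a *+ k end.

Inductive mono := MV of nat | MM of mono & mono.
Fixpoint evm env m : M := match m with MV n => nth 0 env n | MM a b => mul (evm env a) (evm env b) end.
Fixpoint meq a b : bool := match a, b with MV n, MV k => Nat.eqb n k
  | MM a1 a2, MM b1 b2 => meq a1 b1 && meq a2 b2 | _, _ => false end.
Lemma meqP a b : meq a b -> a = b.
Proof.
elim: a b => [n|a1 IH1 a2 IH2] [k|b1 b2] //=.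
- by move/PeanoNat.Nat.eqb_eq ->.
- by case/andP => /IH1 -> /IH2 ->.
Qed.
Fixpoint mlt a b : bool := match a, b with MV n, MV k => Nat.ltb n k
  | MV _, MM _ _ => true | MM _ _, MV _ => false
  | MM a1 a2, MM b1 b2 => if meq a1 b1 then mlt a2 b2 else mlt a1 b1 end.

Definition poly := seq (F * mono).
Fixpoint evp env (p : poly) : M := match p with [::] => 0 | x :: q => x.1 *: evm env x.2 + evp env q end.
Definition mm (x y : F * mono) : F * mono :=
  if meq x.2 y.2 then (0, x.2) else if mlt x.2 y.2 then (x.1 * y.1, MM x.2 y.2)
  else (- (x.1 * y.1), MM y.2 x.2).
Fixpoint pmul1 x (q : poly) : poly := match q with [::] => [::] | y :: r => mm x y :: pmul1 x r end.
Fixpoint pmul (p q : poly) : poly := match p with [::] => [::] | x :: r => pmul1 x q ++ pmul r q end.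
Fixpoint psc (c : F) (p : poly) : poly := match p with [::] => [::] | x :: r => (c * x.1, x.2) :: psc c r end.
Fixpoint papp (p q : poly) : poly := match p with [::] => q | x :: r => x :: papp r q end.
Fixpoint nrm t : poly := match t with
  | TV n => [:: (1, MV n)] | T0 => [::] | TA a b => papp (nrm a) (nrm b)
  | TN a => psc (-1) (nrm a) | TS c a => psc c (nrm a) | TK a k => psc (k%:R) (nrm a)
  | TM a b => pmul (nrm a) (nrm b) end.

Lemma evp_app env p q : evp env (papp p q) = evp env p + evp env q.
Proof. by elim: p => [|x p IH] /=; rewrite ?add0r // IH addrA. Qed.
Lemma evp_sc env c p : evp env (psc c p) = c *: evp env p.
Proof. by elim: p => [|x p IH] /=; rewrite ?scaler0 // IH scalerDr scalerA. Qed.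
Lemma mm_ok env x y : (mm x y).1 *: evm env (mm x y).2 = mul (x.1 *: evm env x.2) (y.1 *: evm env y.2).
Proof.
rewrite /mm mulZl mulZr scalerA; case: ifP => [/meqP ->|_] /=.
  by rewrite ac scaler0 scale0r.
case: ifP => _ /=; first by [].
by rewrite scaleNr -scalerN -mulC.
Qed.
Lemma evp_pmul1 env x q : evp env (pmul1 x q) = mul (x.1 *: evm env x.2) (evp env q).
Proof. by elim: q => [|y q IH] /=; rewrite ?mul0r // mulDr IH mm_ok. Qed.
Lemma evp_pmul env p q : evp env (pmul p q) = mul (evp env p) (evp env q).
Proof. by elim: p => [|x p IH] /=; rewrite ?mul0l // evp_app IH evp_pmul1 mulDl. Qed.
Lemma nrm_ok env t : evp env (nrm t) = ev env t.
Proof.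
elim: t => [n||a IHa b IHb|a IH|c a IH|a IHa b IHb|a IH k] /=.
- by rewrite scale1r addr0.
- by [].
- by rewrite evp_app IHa IHb.
- by rewrite evp_sc IH scaleN1r.
- by rewrite evp_sc IH.
- by rewrite evp_pmul IHa IHb.
- by rewrite evp_sc IH scaler_nat.
Qed.

Fixpoint coefm m (q : poly) : F := match q with [::] => 0
  | x :: r => if meq m x.2 then x.1 + coefm m r else coefm m r end.
Fixpoint pfilt m (q : poly) : poly := match q with [::] => [::]
  | x :: r => if meq m x.2 then pfilt m r else x :: pfilt m r end.
Lemma evp_split env m q : evp env q = coefm m q *: evm env m + evp env (pfilt m q).
Proof.
elim: q => [|x q IH] /=; first by rewrite scale0r addr0.
case: ifP => [/meqP <-|_] /=; rewrite IH.
  by rewrite scalerDl addrA.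
by rewrite addrCA.
Qed.
Fixpoint grp (f : nat) (p : poly) : poly := match f, p with
  | _, [::] => [::] | 0, _ => p
  | f'.+1, x :: q => (x.1 + coefm x.2 q, x.2) :: grp f' (pfilt x.2 q) end.
Lemma grp_ok env f p : evp env (grp f p) = evp env p.
Proof.
elim: f p => [|f IH] [|x q] //=.
by rewrite IH [in RHS](evp_split env x.2 q) scalerDl addrA.
Qed.
Fixpoint all0 (p : poly) : Prop := match p with [::] => True | x :: q => x.1 = 0 /\ all0 q end.
Lemma all0_ok env p : all0 p -> evp env p = 0.
Proof. by elim: p => [|x p IH] //= [-> /IH ->]; rewrite scale0r addr0. Qed.
Lemma solve0 env t : all0 (grp (size (nrm t)) (nrm t)) -> ev env t = 0.
Proof. by move/(all0_ok env); rewrite grp_ok nrm_ok. Qed.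

Lemma addh (l r : M) (h : l = r) (c : F) (x y : M) : x + c *: (l - r) = y -> x = y.
Proof. by rewrite h subrr scaler0 addr0. Qed.
Lemma to0 (x y : M) : x - y = 0 -> x = y.
Proof. by move/eqP; rewrite subr_eq0 => /eqP. Qed.
End Refl.
Arguments addh {F M l r} h c {x y}.

Ltac inenv x env := lazymatch env with
  | nil => constr:(false)
  | x :: _ => constr:(true)
  | _ :: ?r => inenv x r end.
Ltac lookup x env := lazymatch env with
  | x :: _ => constr:(0%N)
  | _ :: ?r => let n := lookup x r in constr:(S n) end.
Ltac collect mul t env := lazymatch t with
  | ?a + ?b => let e := collect mul a env in collect mul b e
  | - ?a => collect mul a env
  | ?c *: ?a => collect mul a env
  | ?a *+ ?k => collect mul a env
  | 0 => env
  | mul ?a ?b => let e := collect mul a env in collect mul b e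
  | _ => let b := inenv t env in lazymatch b with true => env | false => constr:(t :: env) end
  end.
Ltac reify F mul env t := lazymatch t with
  | ?a + ?b => let x := reify F mul env a in let y := reify F mul env b in constr:(@TA F x y)
  | - ?a => let x := reify F mul env a in constr:(@TN F x)
  | ?c *: ?a => let x := reify F mul env a in constr:(@TS F c x)
  | ?a *+ ?k => let x := reify F mul env a in constr:(@TK F x k)
  | 0 => constr:(@T0 F)
  | mul ?a ?b => let x := reify F mul env a in let y := reify F mul env b in constr:(@TM F x y)
  | _ => let n := lookup t env in constr:(@TV F n)
  end.
Ltac lin0 F mul bil ac := lazymatch goal with |- ?t = 0 =>
  let T := type of t in let env := collect mul t (@nil T) in let s := reify F mul env t in
  change (ev mul env s = 0); apply: (solve0 bil ac); cbn -[GRing.add GRing.opp GRing.mul GRing.zero GRing.one GRing.inv GRing.natmul]; repeat split end.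
Ltac lin F mul bil ac := apply: to0; lin0 F mul bil ac.


Section Main.
Variables (F : fieldType) (M : lmodType F) (mul : M -> M -> M) (E H Fe : M) (I : eqType) (U V : I -> M).
Hypothesis two : (2%:R : F) != 0.
Hypothesis three : (3%:R : F) != 0.
Hypothesis bil : bilinear_prod mul.
Hypothesis ac : anticomm mul.
Hypothesis mal : malcev_identity mul.
Hypothesis EH : mul E H = E.
Hypothesis FH : mul Fe H = - Fe.
Hypothesis EF : mul E Fe = (2%:R : F)^-1 *: H.
Local Notation inN := (in_N mul E H Fe).
Local Notation inJ := (in_J mul E H Fe).
Local Notation sp3 := (in_span3 E H Fe).
Hypothesis dec : forall m, exists n x, [/\ inN n, inJ x & m = n + x].
Hypothesis NJ0 : forall m, inN m -> inJ m -> m = 0.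
Hypothesis UVJ : forall k, inJ (U k) /\ inJ (V k).
Hypothesis std : forall k, std_pair mul E H Fe (U k) (V k).
Hypothesis span : forall x, inJ x ->
     exists (s : seq I) (a b : I -> F), x = \sum_(k <- s) (a k *: U k + b k *: V k).
Hypothesis indep : forall (s : seq I) (a b : I -> F), uniq s ->
     \sum_(k <- s) (a k *: U k + b k *: V k) = 0 ->
     forall k, k \in s -> a k = 0 /\ b k = 0.

Local Ltac L := lin F mul bil ac.
Local Ltac FLD := field; try exact two; try exact three; try done.
Local Notation mulDl := (mulDl bil). Local Notation mulDr := (mulDr bil).
Local Notation mulZl := (mulZl bil). Local Notation mulZr := (mulZr bil).
Local Notation mulNl := (mulNl bil). Local Notation mulNr := (mulNr bil).
Local Notation mul0l := (mul0l bil). Local Notation mul0r := (mul0r bil).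
Local Notation mulC := (mulC bil ac).

Lemma HE : mul H E = - E. Proof. by rewrite mulC EH. Qed.
Lemma HF : mul H Fe = Fe. Proof. by rewrite mulC FH opprK. Qed.
Lemma FE : mul Fe E = - ((2%:R : F)^-1 *: H). Proof. by rewrite mulC EF. Qed.
Lemma EE : mul E E = 0. Proof. exact: ac. Qed.
Lemma HH : mul H H = 0. Proof. exact: ac. Qed.
Lemma FF : mul Fe Fe = 0. Proof. exact: ac. Qed.

Local Ltac simp := rewrite ?(mulDl, mulDr, mulZl, mulZr, mulNl, mulNr, mul0l, mul0r,
   EH, FH, EF, HE, HF, FE, EE, HH, FF).

Lemma I1 x y w z : jacobian mul x y (mul w z) + jacobian mul w y (mul x z)
  = mul (jacobian mul x y z) w + mul (jacobian mul w y z) x.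
Proof.
rewrite /jacobian; apply: (addh (mal x y z w) (-1)); apply: (addh (mal x w y z) (-1)).
L; ring.
Qed.

Lemma I2 x y a b : mul (mul x y) (mul a b) - mul (mul (mul x y) b) a + mul (mul (mul x y) a) b
  = mul (mul x (mul a b) - mul (mul x b) a + mul (mul x a) b) y
  + mul x (mul y (mul a b) - mul (mul y b) a + mul (mul y a) b).
Proof.
apply: (addh (mal x y b a) (-1)); apply: (addh (mal x a y b) (-1)); apply: (addh (mal x a b y) (-1)).
L; ring.
Qed.

Lemma sp3E : sp3 E. Proof. by exists 1, 0, 0; rewrite scale1r !scale0r !addr0. Qed.
Lemma sp3H : sp3 H. Proof. by exists 0, 1, 0; rewrite scale1r !scale0r add0r addr0. Qed.
Lemma sp3F : sp3 Fe. Proof. by exists 0, 0, 1; rewrite scale1r !scale0r !add0r. Qed.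
Lemma sp3_mulH a : sp3 a -> sp3 (mul a H).
Proof.
case=> al [be [ga ->]]; exists al, 0, (- ga); simp; L; ring.
Qed.
Lemma Ljac a b : sp3 a -> sp3 b -> jacobian mul a b H = 0.
Proof.
case=> al [be [ga ->]]; case=> al' [be' [ga' ->]]; rewrite /jacobian; simp; L; ring.
Qed.

Lemma DJ x a b : inJ x -> sp3 a -> sp3 b ->
  mul x (mul a b) - mul (mul x b) a + mul (mul x a) b = - mul x (mul a b).
Proof. move=> hx ha hb; have t := hx a b ha hb; rewrite /trip in t; apply: (addh t (-1)); L; ring. Qed.

Lemma DN n a b : inN n -> sp3 a -> sp3 b ->
  mul n (mul a b) - mul (mul n b) a + mul (mul n a) b = mul n (mul a b) *+ 2.
Proof. move=> hn ha hb; have t := hn a b ha hb; rewrite /jacobian in t; apply: (addh t (-1)); L; ring. Qed.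

Lemma DER x y a b : inJ x -> inJ y -> inN (mul x y) -> sp3 a -> sp3 b ->
  mul (mul x y) (mul a b) *+ 2 = - mul (mul x (mul a b)) y - mul x (mul y (mul a b)).
Proof.
move=> hx hy hn ha hb.
by rewrite -(DN hn ha hb) I2 (DJ hx ha hb) (DJ hy ha hb) mulNl mulNr.
Qed.

Lemma fE x y : inJ x -> inJ y -> inN (mul x y) ->
  mul (mul x y) E = - ((2%:R : F)^-1 *: (mul (mul x E) y + mul x (mul y E))).
Proof.
move=> hx hy hn; have h := DER hx hy hn sp3E sp3H; rewrite EH in h.
apply: (addh h (- (2%:R : F)^-1)); L; FLD.
Qed.
Lemma fF x y : inJ x -> inJ y -> inN (mul x y) ->
  mul (mul x y) Fe = - ((2%:R : F)^-1 *: (mul (mul x Fe) y + mul x (mul y Fe))).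
Proof.
move=> hx hy hn; have h := DER hx hy hn sp3F sp3H; rewrite FH in h.
apply: (addh h ((2%:R : F)^-1)); L; FLD.
Qed.
Lemma fH x y : inJ x -> inJ y -> inN (mul x y) ->
  mul (mul x y) H = - ((2%:R : F)^-1 *: (mul (mul x H) y + mul x (mul y H))).
Proof.
move=> hx hy hn; have h := DER hx hy hn sp3E sp3F; rewrite EF in h.
apply: (addh h (-1)); L; FLD.
Qed.

Lemma inN0 : inN 0.
Proof. by move=> a b _ _; rewrite /jacobian; simp; rewrite !addr0. Qed.
Lemma inND x y : inN x -> inN y -> inN (x + y).
Proof.
move=> hx hy a b ha hb; have := hx a b ha hb; have := hy a b ha hb; rewrite /jacobian => h1 h2.
apply: (addh h1 (-1)); apply: (addh h2 (-1)); L; ring.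
Qed.
Lemma inNZ c x : inN x -> inN (c *: x).
Proof.
move=> hx a b ha hb; have := hx a b ha hb; rewrite /jacobian => h1.
apply: (addh h1 (-c)); L; ring.
Qed.
Lemma inJ0 : inJ 0.
Proof. by move=> a b _ _; rewrite /trip; simp; rewrite mul0rn !subrr addr0. Qed.
Lemma inJD x y : inJ x -> inJ y -> inJ (x + y).
Proof.
move=> hx hy a b ha hb; have := hx a b ha hb; have := hy a b ha hb; rewrite /trip => h1 h2.
apply: (addh h1 (-1)); apply: (addh h2 (-1)); L; ring.
Qed.
Lemma inJZ c x : inJ x -> inJ (c *: x).
Proof.
move=> hx a b ha hb; have := hx a b ha hb; rewrite /trip => h1.
apply: (addh h1 (-c)); L; ring.
Qed.

Lemma inNH n : inN n -> inN (mul n H).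
Proof.
move=> hn a b ha hb.
have := I1 a b n H.
rewrite (hn b (mul a H) hb (sp3_mulH ha)) (hn b H hb sp3H) (Ljac ha hb) !mul0l addr0 => h.
rewrite /jacobian in h *; apply: (addh h (-1)); L; ring.
Qed.

Lemma mul_suml (T : Type) (s : seq T) (f : T -> M) y :
  mul (\sum_(k <- s) f k) y = \sum_(k <- s) mul (f k) y.
Proof. by elim: s => [|k s IH]; rewrite ?big_nil ?mul0l // !big_cons mulDl IH. Qed.
Lemma mul_sumr (T : Type) (s : seq T) (f : T -> M) y :
  mul y (\sum_(k <- s) f k) = \sum_(k <- s) mul y (f k).
Proof. by elim: s => [|k s IH]; rewrite ?big_nil ?mul0r // !big_cons mulDr IH. Qed.

Lemma UH k : mul (U k) H = U k. Proof. by case: (std k) => [[]]. Qed.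
Lemma VH k : mul (V k) H = - V k. Proof. by case: (std k) => [[]]. Qed.
Lemma UE k : mul (U k) E = V k. Proof. by case: (std k) => [[]]. Qed.
Lemma UF k : mul (U k) Fe = 0. Proof. by case: (std k) => [_ []]. Qed.
Lemma VE k : mul (V k) E = 0. Proof. by case: (std k) => [_ []]. Qed.
Lemma VF k : mul (V k) Fe = - U k. Proof. by case: (std k) => [_ []]. Qed.

Lemma inJ_sum (s : seq I) (a b : I -> F) : inJ (\sum_(k <- s) (a k *: U k + b k *: V k)).
Proof.
elim: s => [|k s IH]; rewrite ?big_nil ?big_cons; first exact: inJ0.
by apply: inJD => //; apply: inJD; apply: inJZ; case: (UVJ k).
Qed.

Lemma inJH m : inJ m -> inJ (mul m H).
Proof.
case/span => s [a [b ->]]; rewrite mul_suml.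
have -> : \sum_(k <- s) mul (a k *: U k + b k *: V k) H = \sum_(k <- s) (a k *: U k + (- b k) *: V k).
  by apply: eq_bigr => k _; rewrite mulDl !mulZl UH VH scaleNr scalerN.
exact: inJ_sum.
Qed.

Lemma sum_undup (s : seq I) (g : I -> M) :
  \sum_(k <- s) g k = \sum_(k <- undup s) g k *+ count_mem k s.
Proof.
rewrite -big_undup_iterop_count; apply: eq_bigr => k _.
by case: (count_mem k s) => [|n] //; rewrite iteropS iter_addr mulrSr.
Qed.

Lemma Jeig m g : inJ m -> mul m H = g *: m -> (1 - g) != 0 -> (-1 - g) != 0 -> m = 0.
Proof.
move=> hm hH h1 h2; case: (span hm) => s [a [b hs]].
pose A := fun k => a k *+ count_mem k s.
pose B := fun k => b k *+ count_mem k s.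
have eqm : m = \sum_(k <- undup s) (A k *: U k + B k *: V k).
  by rewrite hs sum_undup; apply: eq_bigr => k _; rewrite /A /B mulrnDl !scalerMnl.
have hmH : mul m H = \sum_(k <- undup s) (A k *: U k + (- B k) *: V k).
  rewrite {1}eqm mul_suml; apply: eq_bigr => k _.
  by rewrite mulDl !mulZl UH VH scaleNr scalerN.
have h0 : \sum_(k <- undup s) (((1 - g) * A k) *: U k + ((-1 - g) * B k) *: V k) = 0.
  have -> : \sum_(k <- undup s) (((1 - g) * A k) *: U k + ((-1 - g) * B k) *: V k)
      = mul m H - g *: m.
    rewrite hmH eqm scaler_sumr -sumrB; apply: eq_bigr => k _; L; ring.
  by rewrite hH subrr.
have hk0 := indep (undup_uniq s) h0.
rewrite eqm; apply: big1_seq => k /andP [_ hk]; case: (hk0 k hk) => /eqP hA /eqP hB.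
rewrite mulf_eq0 (negbTE h1) /= in hA; rewrite mulf_eq0 (negbTE h2) /= in hB.
by rewrite (eqP hA) (eqP hB) !scale0r addr0.
Qed.

Lemma prodN x y al be : inJ x -> inJ y -> mul x H = al *: x -> mul y H = be *: y ->
  (1 - (al + be)) != 0 -> (-1 - (al + be)) != 0 -> inN (mul x y).
Proof.
move=> hx hy hxH hyH h1 h2.
case: (dec (mul x y)) => n [m [hn hm hP]].
have Dx : mul x (mul E Fe) - mul (mul x Fe) E + mul (mul x E) Fe = (- ((2%:R : F)^-1 * al)) *: x.
  by rewrite (DJ hx sp3E sp3F) EF mulZr hxH scalerA scaleNr.
have Dy : mul y (mul E Fe) - mul (mul y Fe) E + mul (mul y E) Fe = (- ((2%:R : F)^-1 * be)) *: y.
  by rewrite (DJ hy sp3E sp3F) EF mulZr hyH scalerA scaleNr.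
have hI := I2 x y E Fe.
rewrite Dx Dy mulZl mulZr hP in hI.
have DNn := DN hn sp3E sp3F; have DJm := DJ hm sp3E sp3F.
rewrite EF in hI DNn DJm.
pose la := - ((2%:R : F)^-1 * al) + - ((2%:R : F)^-1 * be).
have hkey : mul n H - la *: n = (2%:R : F)^-1 *: mul m H + la *: m.
  apply: (addh hI (-1)); apply: (addh DNn 1); apply: (addh DJm 1); rewrite /la; L; FLD.
have hQ : inN (mul n H - la *: n).
  by rewrite -scaleNr; apply: inND; [exact: inNH | exact: inNZ].
have hR : inJ ((2%:R : F)^-1 *: mul m H + la *: m).
  by apply: inJD; apply: inJZ => //; exact: inJH.

have R0 : (2%:R : F)^-1 *: mul m H + la *: m = 0 by apply: NJ0 => //; rewrite -hkey.
have mH : mul m H = (al + be) *: m.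
  apply: (addh R0 (- 2%:R)); rewrite /la; L; FLD.
have m0 := Jeig hm mH h1 h2.
by rewrite hP m0 addr0.
Qed.

Lemma JU k : inJ (U k). Proof. by case: (UVJ k). Qed.
Lemma JV k : inJ (V k). Proof. by case: (UVJ k). Qed.
Lemma UH1 k : mul (U k) H = 1 *: U k. Proof. by rewrite UH scale1r. Qed.
Lemma VH1 k : mul (V k) H = (-1) *: V k. Proof. by rewrite VH scaleN1r. Qed.

Lemma NUU k l : inN (mul (U k) (U l)).
Proof.
apply: (prodN (JU k) (JU l) (UH1 k) (UH1 l)).
  have -> : (1 - (1 + 1) : F) = -1 by ring.
  by rewrite oppr_eq0 oner_eq0.
have -> : (-1 - (1 + 1) : F) = - 3%:R by ring.
by rewrite oppr_eq0.
Qed.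
Lemma NUV k l : inN (mul (U k) (V l)).
Proof.
apply: (prodN (JU k) (JV l) (UH1 k) (VH1 l)).
  have -> : (1 - (1 + -1) : F) = 1 by ring.
  by rewrite oner_eq0.
have -> : (-1 - (1 + -1) : F) = - 1 by ring.
by rewrite oppr_eq0 oner_eq0.
Qed.
Lemma NVU k l : inN (mul (V k) (U l)).
Proof.
apply: (prodN (JV k) (JU l) (VH1 k) (UH1 l)).
  have -> : (1 - (-1 + 1) : F) = 1 by ring.
  by rewrite oner_eq0.
have -> : (-1 - (-1 + 1) : F) = - 1 by ring.
by rewrite oppr_eq0 oner_eq0.
Qed.
Lemma NVV k l : inN (mul (V k) (V l)).
Proof.
apply: (prodN (JV k) (JV l) (VH1 k) (VH1 l)).
  have -> : (1 - (-1 + -1) : F) = 3%:R by ring.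
  by [].
have -> : (-1 - (-1 + -1) : F) = 1 by ring.
by rewrite oner_eq0.
Qed.

Lemma uv_vu k l : mul (U k) (V l) = mul (V k) (U l).
Proof.
have hUUE := fE (JU k) (JU l) (NUU k l); rewrite !UE in hUUE.
have hVUH : mul (mul (V k) (U l)) H = 0.
  by rewrite (fH (JV k) (JU l) (NVU k l)) VH UH; L; FLD.
have hUVH : mul (mul (U k) (V l)) H = 0.
  by rewrite (fH (JU k) (JV l) (NUV k l)) VH UH; L; FLD.
have hHU : mul H (U k) = - U k by rewrite mulC UH.
have hEU : mul E (U k) = - V k by rewrite mulC UE.
have h := mal (U k) (U l) E H.
rewrite ?(UE, UH, VH, EH, hHU, hEU, mulNl, mulNr, mulDl, mulZl, hUUE, hVUH, hUVH, mul0l, scaler0, oppr0) in h.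
have h3 : (3%:R : F) *: (mul (U k) (V l) - mul (V k) (U l)) = 0.
  by apply: (addh h 2%:R); L; FLD.
by move/eqP: h3; rewrite scaler_eq0 (negbTE three) /= subr_eq0 => /eqP.
Qed.

Lemma inN_sum (T : Type) (s : seq T) (f : T -> M) : (forall k, inN (f k)) -> inN (\sum_(k <- s) f k).
Proof.
move=> hf; elim: s => [|k s IH]; rewrite ?big_nil ?big_cons; first exact: inN0.
exact: inND.
Qed.

Lemma prodN_all x y : inJ x -> inJ y -> inN (mul x y).
Proof.
case/span => s [a [b ->]]; case/span => s' [a' [b' ->]].
rewrite mul_suml; apply: inN_sum => k; rewrite mul_sumr; apply: inN_sum => l.
rewrite mulDl !mulDr !mulZl !mulZr.
apply: inND; apply: inND; apply: inNZ; apply: inNZ;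
  [exact: NUU | exact: NUV | exact: NVU | exact: NVV].
Qed.

Lemma main_sec i j :
  [/\ mul (mul (U i) (U j)) E = - mul (U i) (V j),
      mul (mul (U i) (V j)) E = - ((2%:R : F)^-1 *: mul (V i) (V j)) &
      mul (mul (V i) (V j)) E = 0]
  /\ [/\ mul (mul (U i) (U j)) Fe = 0,
      mul (mul (U i) (V j)) Fe = (2%:R : F)^-1 *: mul (U i) (U j) &
      mul (mul (V i) (V j)) Fe = mul (U i) (V j)]
  /\ [/\ mul (mul (U i) (U j)) H = - mul (U i) (U j),
      mul (mul (U i) (V j)) H = 0 &
      mul (mul (V i) (V j)) H = mul (V i) (V j)]
  /\ mul (U i) (V j) = mul (V i) (U j)
  /\ (forall x y a b, inJ x -> inJ y -> sp3 a -> sp3 b ->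
        jacobian mul (mul x y) a b = 0)
  /\ (i = j -> forall x y, in_span2 (U i) (V i) x -> in_span2 (U i) (V i) y -> mul x y = 0).
Proof using two three bil ac mal EH FH EF dec NJ0 UVJ std span indep.
split; [split|split; [split|split; [split|split; [|split]]]].
- by rewrite (fE (JU i) (JU j) (NUU i j)) !UE -(uv_vu i j); L; FLD.
- by rewrite (fE (JU i) (JV j) (NUV i j)) UE VE; L; FLD.
- by rewrite (fE (JV i) (JV j) (NVV i j)) !VE; L; FLD.
- by rewrite (fF (JU i) (JU j) (NUU i j)) !UF; L; FLD.
- by rewrite (fF (JU i) (JV j) (NUV i j)) UF VF; L; FLD.
- by rewrite (fF (JV i) (JV j) (NVV i j)) !VF mulNl mulNr -(uv_vu i j); L; FLD.
- by rewrite (fH (JU i) (JU j) (NUU i j)) !UH; L; FLD.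
- by rewrite (fH (JU i) (JV j) (NUV i j)) UH VH; L; FLD.
- by rewrite (fH (JV i) (JV j) (NVV i j)) !VH; L; FLD.
- exact: uv_vu.
- by move=> x y a b hx hy ha hb; exact: (prodN_all hx hy).
- move=> eij; subst j; move=> x y [a [b ->]] [c [d ->]].
  have h := uv_vu i i.
  have h2 : (2%:R : F) *: mul (U i) (V i) = 0 by apply: (addh h (-1)); L; FLD.
  move/eqP: h2; rewrite scaler_eq0 (negbTE two) /= => /eqP z.
  by apply: (addh z (- (a * d - b * c))); L; FLD.
Qed.
End Main.


Theorem lemmal3 (F : fieldType) (M : lmodType F) (mul : M -> M -> M)
  (E H Fe : M) (I : eqType) (U V : I -> M) (i j : I) :
  (2%:R : F) != 0 -> (3%:R : F) != 0 ->
  in_variety_H mul ->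
  is_sl2 mul E H Fe ->
  (* mL <> 0 for every nonzero m *)
  (forall m, m != 0 -> exists a, in_span3 E H Fe a /\ mul m a != 0) ->
  (* known fact: M = N_M (+) J_M *)
  (forall m, exists n x, [/\ in_N mul E H Fe n, in_J mul E H Fe x & m = n + x]) ->
  (forall m, in_N mul E H Fe m -> in_J mul E H Fe m -> m = 0) ->
  (* known fact: J_M = (+)_k V_{2k}, V_{2k} with standard basis {U k, V k} *)
  (forall k, in_J mul E H Fe (U k) /\ in_J mul E H Fe (V k)) ->
  (forall k, std_pair mul E H Fe (U k) (V k)) ->
  (forall x, in_J mul E H Fe x ->
     exists (s : seq I) (a b : I -> F), x = \sum_(k <- s) (a k *: U k + b k *: V k)) ->
  (forall (s : seq I) (a b : I -> F), uniq s ->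
     \sum_(k <- s) (a k *: U k + b k *: V k) = 0 ->
     forall k, k \in s -> a k = 0 /\ b k = 0) ->
  let ui := U i in let vi := V i in let uj := U j in let vj := V j in
  [/\ mul (mul ui uj) E = - mul ui vj,
      mul (mul ui vj) E = - ((2%:R : F)^-1 *: mul vi vj) &
      mul (mul vi vj) E = 0]
  /\ [/\ mul (mul ui uj) Fe = 0,
      mul (mul ui vj) Fe = (2%:R : F)^-1 *: mul ui uj &
      mul (mul vi vj) Fe = mul ui vj]
  /\ [/\ mul (mul ui uj) H = - mul ui uj,
      mul (mul ui vj) H = 0 &
      mul (mul vi vj) H = mul vi vj]
  /\ mul ui vj = mul vi uj
  /\ (forall x y a b, in_J mul E H Fe x -> in_J mul E H Fe y ->
        in_span3 E H Fe a -> in_span3 E H Fe b ->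
        jacobian mul (mul x y) a b = 0)
  /\ (i = j -> forall x y, in_span2 ui vi x -> in_span2 ui vi y -> mul x y = 0).

Proof.
move=> two three [[bil [ac mal]] _] [_ [EH FH EF]] _ dec NJ0 UVJ std span indep.
exact: (main_sec two three bil ac mal EH FH EF dec NJ0 UVJ std span indep i j).
Qed.
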